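(* Let $c_1<0$, $c_2,c_3\in\mathbb{R}$ and define $p(a,x)=c_1a+c_2x+c_3$ for $a\in\{0,1\}$, $x\in\mathbb{R}$. Consider two patient classes $i=1,2$: in class $i$ the feature $x$ is distributed as $\mathcal N(\mu_i,\sigma_i^2)$ with density $f_i$, and for weeks $h=1,\dots,4$ there are numbers $\alpha_i^h$ (the proportion of class-$i$ readmissions occurring in week $h$) such that the class-$i$ week-$h$ readmission risk is $p_i^h(a,x)=\alpha_i^h\,p(a,x)$. (i) For each $i$, $p_i^h(a,x)=c^h_{1,i}a+c^h_{2,i}x+c^h_{3,i}$ with $c^h_{j,i}=\alpha_i^hc_j$, $j=1,2,3$. (ii) Let the population be a mixture of the two classes with probabilities $q_1,q_2\in(0,1)$, $q_1+q_2=1$, and define the mixture week-$h$ risk $p^h(a,x)=\sum_{i=1}^2\frac{q_if_i(x)}{q_1f_1(x)+q_2f_2(x)}\,p_i^h(a,x)$. If $\alpha_1^h\neq\alpha_2^h$ and the feature distributions of the two classes are different, then $p^h(a,x)$ is not a linear (affine) function of $(a,x)$. *)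

(* Defs.v *)
From Stdlib Require Export Reals.
Open Scope R_scope.

Definition normal_pdf (mu sigma x : R) : R :=
  exp (- (x - mu) ^ 2 / (2 * sigma ^ 2)) / (sigma * sqrt (2 * PI)).

Definition base_risk (c1 c2 c3 a x : R) : R := c1 * a + c2 * x + c3.

Definition class_risk (alpha : nat -> R) (h : nat) (c1 c2 c3 a x : R) : R :=
  alpha h * base_risk c1 c2 c3 a x.

Definition mixture_risk (q1 q2 mu1 sigma1 mu2 sigma2 : R)
    (alpha1 alpha2 : nat -> R) (h : nat) (c1 c2 c3 a x : R) : R :=
  let f1 := normal_pdf mu1 sigma1 x in
  let f2 := normal_pdf mu2 sigma2 x in
  q1 * f1 / (q1 * f1 + q2 * f2) * class_risk alpha1 h c1 c2 c3 a x
  + q2 * f2 / (q1 * f1 + q2 * f2) * class_risk alpha2 h c1 c2 c3 a x.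

(* Main.v *)
Require Import Defs.
From Stdlib Require Import Reals Lra Psatz.
Open Scope R_scope.

Lemma npdf_pos mu s x : 0 < s -> 0 < normal_pdf mu s x.
Proof.
  intros hs. unfold normal_pdf. apply Rdiv_lt_0_compat. apply exp_pos.
  apply Rmult_lt_0_compat; auto. apply sqrt_lt_R0. pose proof PI_RGT_0; lra.
Qed.

Lemma cross_exp mu1 s1 mu2 s2 x y : 0 < s1 -> 0 < s2 ->
  normal_pdf mu1 s1 x * normal_pdf mu2 s2 y = normal_pdf mu1 s1 y * normal_pdf mu2 s2 x ->
  - (x - mu1) ^ 2 / (2 * s1 ^ 2) + - (y - mu2) ^ 2 / (2 * s2 ^ 2)
  = - (y - mu1) ^ 2 / (2 * s1 ^ 2) + - (x - mu2) ^ 2 / (2 * s2 ^ 2).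
Proof.
  intros h1 h2 H. unfold normal_pdf in H.
  assert (hr : 0 < sqrt (2 * PI)) by (apply sqrt_lt_R0; pose proof PI_RGT_0; lra).
  apply exp_inv. rewrite !exp_plus.
  assert (H' : exp (- (x - mu1) ^ 2 / (2 * s1 ^ 2)) * exp (- (y - mu2) ^ 2 / (2 * s2 ^ 2))
     / (s1 * sqrt (2*PI) * (s2 * sqrt (2*PI))) =
     exp (- (y - mu1) ^ 2 / (2 * s1 ^ 2)) * exp (- (x - mu2) ^ 2 / (2 * s2 ^ 2))
     / (s1 * sqrt (2*PI) * (s2 * sqrt (2*PI)))).
  { rewrite <- (Rmult_comm (exp (- (x - mu2) ^ 2 / (2 * s2 ^ 2)))).
    replace (exp (- (x - mu1) ^ 2 / (2 * s1 ^ 2)) * exp (- (y - mu2) ^ 2 / (2 * s2 ^ 2))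
     / (s1 * sqrt (2*PI) * (s2 * sqrt (2*PI)))) with
     (exp (- (x - mu1) ^ 2 / (2 * s1 ^ 2)) / (s1 * sqrt (2 * PI)) *
       (exp (- (y - mu2) ^ 2 / (2 * s2 ^ 2)) / (s2 * sqrt (2 * PI)))) by (field; lra).
    rewrite H. field; lra. }
  assert (hd : 0 < s1 * sqrt (2*PI) * (s2 * sqrt (2*PI))) by
    (apply Rmult_lt_0_compat; apply Rmult_lt_0_compat; auto).
  apply (Rmult_eq_compat_r (s1 * sqrt (2*PI) * (s2 * sqrt (2*PI)))) in H'.
  unfold Rdiv in H'. rewrite !Rmult_assoc, !Rinv_l in H' by lra. lra.
Qed.

Theorem proposition2
  (c1 c2 c3 : R) (hc1 : c1 < 0)
  (mu1 sigma1 mu2 sigma2 : R) (hs1 : 0 < sigma1) (hs2 : 0 < sigma2)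
  (alpha1 alpha2 : nat -> R)
  (halpha1 : forall h, (1 <= h <= 4)%nat -> 0 <= alpha1 h)
  (halpha2 : forall h, (1 <= h <= 4)%nat -> 0 <= alpha2 h)
  (hsum1 : alpha1 1%nat + alpha1 2%nat + alpha1 3%nat + alpha1 4%nat = 1)
  (hsum2 : alpha2 1%nat + alpha2 2%nat + alpha2 3%nat + alpha2 4%nat = 1) :
  (* (i) *)
  (forall h, (1 <= h <= 4)%nat -> forall a x,
     class_risk alpha1 h c1 c2 c3 a x
       = (alpha1 h * c1) * a + (alpha1 h * c2) * x + alpha1 h * c3 /\
     class_risk alpha2 h c1 c2 c3 a x
       = (alpha2 h * c1) * a + (alpha2 h * c2) * x + alpha2 h * c3) /\
  (* (ii) *)
  (forall (q1 q2 : R) (h : nat),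
     0 < q1 < 1 -> 0 < q2 < 1 -> q1 + q2 = 1 ->
     (1 <= h <= 4)%nat ->
     alpha1 h <> alpha2 h ->
     (mu1, sigma1) <> (mu2, sigma2) ->
     ~ (exists b1 b2 b3 : R, forall a x : R, (a = 0 \/ a = 1) ->
          mixture_risk q1 q2 mu1 sigma1 mu2 sigma2 alpha1 alpha2 h c1 c2 c3 a x
            = b1 * a + b2 * x + b3)).
Proof.
  split.
  { intros h _ a x. unfold class_risk, base_risk. split; ring. }
  intros q1 q2 h hq1 hq2 hq _ hal hne [b1 [b2 [b3 H]]].
  set (A1 := alpha1 h * c1 - b1). set (A2 := b1 - alpha2 h * c1).
  assert (key : forall x, q1 * normal_pdf mu1 sigma1 x * A1 = q2 * normal_pdf mu2 sigma2 x * A2).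
  { intros x. pose proof (H 1 x (or_intror eq_refl)) as H1.
    pose proof (H 0 x (or_introl eq_refl)) as H0.
    unfold mixture_risk, class_risk, base_risk in H1, H0.
    pose proof (npdf_pos mu1 sigma1 x hs1) as p1. pose proof (npdf_pos mu2 sigma2 x hs2) as p2.
    set (f1 := normal_pdf mu1 sigma1 x) in *. set (f2 := normal_pdf mu2 sigma2 x) in *.
    assert (hD : 0 < q1 * f1 + q2 * f2) by nra.
    set (D := q1 * f1 + q2 * f2) in *.
    set (N := q1 * f1 * alpha1 h + q2 * f2 * alpha2 h).
    assert (E1 : N * (c1 * 1 + c2 * x + c3) / D = b1 * 1 + b2 * x + b3).
    { rewrite <- H1. unfold N. field. lra. }
    assert (E0 : N * (c1 * 0 + c2 * x + c3) / D = b1 * 0 + b2 * x + b3).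
    { rewrite <- H0. unfold N. field. lra. }
    assert (E : N * c1 / D = b1).
    { replace (N * c1 / D) with (N * (c1 * 1 + c2 * x + c3) / D - N * (c1 * 0 + c2 * x + c3) / D)
        by (field; lra). rewrite E1, E0. ring. }
    assert (E' : N * c1 = b1 * D).
    { rewrite <- E. field. lra. }
    enough (Z : q1 * f1 * A1 - q2 * f2 * A2 = 0) by lra.
    replace 0 with (N * c1 - b1 * D) by (rewrite E'; ring).
    unfold A1, A2, N, D. ring. }
  assert (nA1 : A1 <> 0).
  { intro z. pose proof (key 0) as k. rewrite z in k.
    pose proof (npdf_pos mu2 sigma2 0 hs2).
    assert (A2 = 0).
    { rewrite Rmult_0_r in k. symmetry in k. apply Rmult_integral in k.
      destruct k as [k|k]; [|exact k]. apply Rmult_integral in k. lra. }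
    apply hal. unfold A1, A2 in *.
    apply (Rmult_eq_reg_r c1); lra. }
  assert (cross : forall x y, normal_pdf mu1 sigma1 x * normal_pdf mu2 sigma2 y
                            = normal_pdf mu1 sigma1 y * normal_pdf mu2 sigma2 x).
  { intros x y. pose proof (key x) as kx. pose proof (key y) as ky.
    apply (Rmult_eq_reg_l (q1 * A1)).
    2:{ intro z. apply Rmult_integral in z. destruct z; lra. }
    transitivity (q1 * normal_pdf mu1 sigma1 x * A1 * normal_pdf mu2 sigma2 y); [ring|].
    rewrite kx.
    transitivity (q1 * normal_pdf mu1 sigma1 y * A1 * normal_pdf mu2 sigma2 x); [|ring].
    rewrite ky. ring. }
  pose proof (cross_exp mu1 sigma1 mu2 sigma2 1 0 hs1 hs2 (cross 1 0)) as g1.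
  pose proof (cross_exp mu1 sigma1 mu2 sigma2 (-1) 0 hs1 hs2 (cross (-1) 0)) as g2.
  set (P := / (2 * sigma1 ^ 2)). set (Q := / (2 * sigma2 ^ 2)).
  assert (hP : 0 < P) by (unfold P; apply Rinv_0_lt_compat; nra).
  assert (hQ : 0 < Q) by (unfold Q; apply Rinv_0_lt_compat; nra).
  assert (g1' : - (1 - mu1) ^ 2 * P + - (0 - mu2) ^ 2 * Q = - (0 - mu1) ^ 2 * P + - (1 - mu2) ^ 2 * Q).
  { unfold P, Q. unfold Rdiv in g1. lra. }
  assert (g2' : - (-1 - mu1) ^ 2 * P + - (0 - mu2) ^ 2 * Q = - (0 - mu1) ^ 2 * P + - (-1 - mu2) ^ 2 * Q).
  { unfold P, Q. unfold Rdiv in g2. lra. }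
  assert (PQ : P = Q) by nra.
  assert (mm : mu1 = mu2).
  { rewrite <- PQ in g1'. nra. }
  assert (ss : sigma1 = sigma2).
  { unfold P, Q in PQ.
    assert (sigma1 ^ 2 = sigma2 ^ 2).
    { apply (f_equal Rinv) in PQ. rewrite !Rinv_inv in PQ. lra. }
    nra. }
  apply hne. rewrite mm, ss. reflexivity.
Qed.
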